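(* Let $b_1,b_2,b_3\in\mathbb{R}$ with $b_1b_2b_3\neq 0$, and define $$\bar P^b(x)=\begin{pmatrix}0&\frac{b_1b_2}{b_3}x_3&b_1x_2\\ -\frac{b_1b_2}{b_3}x_3&0&0\\ -b_1x_2&0&0\end{pmatrix},\qquad \bar H^b(x)=-\frac{b_3}{2b_1}x_1^2+x_3,\qquad \bar C^b(x)=\frac{b_1}{2}\Big(x_2^2-\frac{b_2}{b_3}x_3^2\Big).$$ Then: (i) $(\mathbb{R}^3,\bar P^b,\bar H^b)$ is a Hamilton-Poisson realization of the system $$\dot x_1=b_1x_2,\qquad \dot x_2=b_2x_1x_3,\qquad \dot x_3=b_3x_1x_2,$$ that is, $\bar P^b$ defines a Poisson bracket $\{f,g\}_1=(\nabla f)^T\bar P^b\nabla g$ on $\mathbb{R}^3$ and the system reads $\dot x=\bar P^b(x)\nabla\bar H^b(x)$; (ii) $\bar C^b$ is a Casimir of $(\mathbb{R}^3,\{\cdot,\cdot\}_1)$, i.e. $\{\bar C^b,f\}_1=0$ for all $f\in C^\infty(\mathbb{R}^3,\mathbb{R})$. *)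

(* Defs.v *)
From Stdlib Require Import Reals List.
From Coquelicot Require Import Coquelicot.
Open Scope R_scope.

Definition pt := (R * R * R)%type.
Inductive ix : Type := i1 | i2 | i3.

Definition coord (i : ix) (x : pt) : R :=
  match i, x with
  | i1, (a, _, _) => a
  | i2, (_, b, _) => b
  | i3, (_, _, c) => c
  end.

Definition upd (i : ix) (t : R) (x : pt) : pt :=
  match i, x with
  | i1, (_, b, c) => (t, b, c)
  | i2, (a, _, c) => (a, t, c)
  | i3, (a, b, _) => (a, b, t)
  end.

Definition sum3 (F : ix -> R) : R := F i1 + F i2 + F i3.

Definition partial (i : ix) (f : pt -> R) (x : pt) : R :=
  Derive (fun t => f (upd i t x)) (coord i x).

Definition iter_partial (l : list ix) (f : pt -> R) : pt -> R :=
  fold_right partial f l.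

Definition smooth (f : pt -> R) : Prop :=
  forall l : list ix,
    (forall (i : ix) (x : pt),
        ex_derive (fun t => iter_partial l f (upd i t x)) (coord i x)) /\
    (forall x : pt, continuous (iter_partial l f) x).

Definition mat3 := pt -> ix -> ix -> R.

Definition bracket (P : mat3) (f g : pt -> R) : pt -> R :=
  fun x => sum3 (fun i => sum3 (fun j => partial i f x * P x i j * partial j g x)).

Definition poisson_matrix (P : mat3) : Prop :=
  (forall i j, smooth (fun x => P x i j)) /\
  (forall f g, smooth f -> smooth g -> smooth (bracket P f g)) /\
  (forall f g h (a c : R), smooth f -> smooth g -> smooth h -> forall x,
      bracket P (fun y => a * f y + c * g y) h x
      = a * bracket P f h x + c * bracket P g h x) /\
  (forall f g, smooth f -> smooth g -> forall x,
      bracket P f g x = - bracket P g f x) /\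
  (forall f g h, smooth f -> smooth g -> smooth h -> forall x,
      bracket P (fun y => f y * g y) h x
      = f x * bracket P g h x + g x * bracket P f h x) /\
  (forall f g h, smooth f -> smooth g -> smooth h -> forall x,
      bracket P f (bracket P g h) x + bracket P g (bracket P h f) x
      + bracket P h (bracket P f g) x = 0).

Definition hamilton_poisson_realization (P : mat3) (H : pt -> R)
    (X : pt -> ix -> R) : Prop :=
  poisson_matrix P /\ smooth H /\
  forall x i, X x i = sum3 (fun j => P x i j * partial j H x).

Definition casimir (P : mat3) (C : pt -> R) : Prop :=
  smooth C /\
  forall f, smooth f -> forall x, bracket P C f x = 0.

Definition Pbar (b1 b2 b3 : R) : mat3 := fun x i j =>
  let x2 := coord i2 x in let x3 := coord i3 x in
  match i, j with
  | i1, i2 => b1 * b2 / b3 * x3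
  | i1, i3 => b1 * x2
  | i2, i1 => - (b1 * b2 / b3 * x3)
  | i3, i1 => - (b1 * x2)
  | _, _ => 0
  end.

Definition Hbar (b1 b2 b3 : R) (x : pt) : R :=
  - (b3 / (2 * b1)) * (coord i1 x) ^ 2 + coord i3 x.

Definition Cbar (b1 b2 b3 : R) (x : pt) : R :=
  b1 / 2 * ((coord i2 x) ^ 2 - b2 / b3 * (coord i3 x) ^ 2).

Definition Xsys (b1 b2 b3 : R) (x : pt) (i : ix) : R :=
  let x1 := coord i1 x in let x2 := coord i2 x in let x3 := coord i3 x in
  match i with
  | i1 => b1 * x2
  | i2 => b2 * x1 * x3
  | i3 => b3 * x1 * x2
  end.

(* Main.v *)
Require Import Defs.
From Stdlib Require Import Reals List Lia.
From Stdlib Require Import FunctionalExtensionality.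
From Coquelicot Require Import Coquelicot.
Open Scope R_scope.

Definition fadd (f g : pt -> R) : pt -> R := fun y => f y + g y.
Definition fsub (f g : pt -> R) : pt -> R := fun y => f y - g y.
Definition fmul (f g : pt -> R) : pt -> R := fun y => f y * g y.
Definition fcst (c : R) : pt -> R := fun _ => c.

Definition DD (l : list ix) (F : pt -> R) : Prop :=
    (forall (i : ix) (x : pt),
        ex_derive (fun t => iter_partial l F (upd i t x)) (coord i x)) /\
    (forall x : pt, continuous (iter_partial l F) x).

Lemma smooth_DD F : smooth F <-> forall l, DD l F.
Proof. split; intros H l; apply H. Qed.

Lemma upd_coord i x : upd i (coord i x) x = x.
Proof. destruct i, x as [[a b] c]; reflexivity. Qed.

Lemma iter_partial_app l i F : iter_partial (l ++ i :: nil) F = iter_partial l (partial i F).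
Proof. unfold iter_partial. rewrite fold_right_app. reflexivity. Qed.

Lemma smooth_ex_derive F i x : smooth F -> ex_derive (fun t => F (upd i t x)) (coord i x).
Proof. intro H. exact (proj1 (H nil) i x). Qed.

Lemma smooth_partial i F : smooth F -> smooth (partial i F).
Proof. intros H l. rewrite <- iter_partial_app. apply H. Qed.

Lemma smooth_of_partials F : DD nil F -> (forall i, smooth (partial i F)) -> smooth F.
Proof.
  intros H0 Hp l. induction l as [|i l _] using rev_ind; [exact H0|].
  unfold DD. rewrite iter_partial_app. apply Hp.
Qed.

Lemma smooth_ext f g : (forall x, f x = g x) -> smooth f -> smooth g.
Proof. intros E H. replace g with f; [exact H|]. apply functional_extensionality; exact E. Qed.

Lemma partial_fadd_gen i f g x :
  ex_derive (fun t => f (upd i t x)) (coord i x) ->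
  ex_derive (fun t => g (upd i t x)) (coord i x) ->
  partial i (fadd f g) x = partial i f x + partial i g x.
Proof.
  intros H1 H2. unfold partial, fadd.
  exact (Derive_plus (fun t => f (upd i t x)) (fun t => g (upd i t x)) _ H1 H2).
Qed.

Lemma partial_fmul_gen i f g x :
  ex_derive (fun t => f (upd i t x)) (coord i x) ->
  ex_derive (fun t => g (upd i t x)) (coord i x) ->
  partial i (fmul f g) x = partial i f x * g x + f x * partial i g x.
Proof.
  intros H1 H2. unfold partial, fmul.
  rewrite (Derive_mult (fun t => f (upd i t x)) (fun t => g (upd i t x)) _ H1 H2).
  rewrite upd_coord. reflexivity.
Qed.

Lemma cont_pair {U V W : UniformSpace} (f : U -> V) (g : U -> W) x :
  continuous f x -> continuous g x -> continuous (fun z => (f z, g z)) x.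
Proof.
  intros Hf Hg.
  apply (continuous_comp_2 f g (fun p q => (p,q))); auto.
  apply (continuous_ext (fun x => x)). intros [u v]; reflexivity. apply continuous_id.
Qed.

Lemma DD_nil_add f g : DD nil f -> DD nil g -> DD nil (fadd f g).
Proof.
  intros [H1 C1] [H2 C2]. split.
  - intros i x. simpl. unfold fadd.
    exact (ex_derive_plus _ _ _ (H1 i x) (H2 i x)).
  - intros x. simpl. unfold fadd.
    exact (continuous_plus (V := R_NormedModule) _ _ _ (C1 x) (C2 x)).
Qed.

Lemma DD_nil_mul f g : DD nil f -> DD nil g -> DD nil (fmul f g).
Proof.
  intros [H1 C1] [H2 C2]. split.
  - intros i x. simpl. unfold fmul.
    exact (ex_derive_mult _ _ _ (H1 i x) (H2 i x)).
  - intros x. simpl. unfold fmul.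
    exact (continuous_mult (K := R_AbsRing) _ _ _ (C1 x) (C2 x)).
Qed.

Lemma partial_fadd_fun i f g : smooth f -> smooth g ->
  partial i (fadd f g) = fadd (partial i f) (partial i g).
Proof.
  intros Hf Hg. apply functional_extensionality; intro x.
  apply partial_fadd_gen; apply smooth_ex_derive; auto.
Qed.

Lemma partial_fmul_fun i f g : smooth f -> smooth g ->
  partial i (fmul f g) = fadd (fmul (partial i f) g) (fmul f (partial i g)).
Proof.
  intros Hf Hg. apply functional_extensionality; intro x.
  apply partial_fmul_gen; apply smooth_ex_derive; auto.
Qed.

Definition upto n F := forall l, (length l <= n)%nat -> DD l F.

Lemma upto_smooth F : (forall n, upto n F) -> smooth F.
Proof. intros H l. apply (H (length l)). lia. Qed.

Lemma smooth_upto F n : smooth F -> upto n F.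
Proof. intros H l _. apply H. Qed.

Lemma upto_add n : forall f g, upto n f -> upto n g -> upto n (fadd f g).
Proof.
  induction n as [|n IH]; intros f g Hf Hg l Hl.
  - destruct l; [|simpl in Hl; lia].
    apply DD_nil_add; [apply Hf|apply Hg]; simpl; lia.
  - destruct l as [|i0 l0] eqn:El.
    + apply DD_nil_add; [apply Hf|apply Hg]; simpl; lia.
    + destruct (exists_last (l:=i0::l0) ltac:(discriminate)) as [l' [i E]].
      rewrite E in *. rewrite length_app in Hl. simpl in Hl.
      unfold DD. rewrite iter_partial_app.
      assert (Ef : partial i (fadd f g) = fadd (partial i f) (partial i g)).
      { apply functional_extensionality; intro x. apply partial_fadd_gen.
        - exact (proj1 (Hf nil ltac:(simpl; lia)) i x).
        - exact (proj1 (Hg nil ltac:(simpl; lia)) i x). }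
      rewrite Ef. apply (IH (partial i f) (partial i g)); [| |lia].
      * intros l1 Hl1. unfold DD. rewrite <- iter_partial_app. apply Hf.
        rewrite length_app; simpl; lia.
      * intros l1 Hl1. unfold DD. rewrite <- iter_partial_app. apply Hg.
        rewrite length_app; simpl; lia.
Qed.

Lemma smooth_fadd f g : smooth f -> smooth g -> smooth (fadd f g).
Proof. intros Hf Hg. apply upto_smooth; intro n. apply upto_add; apply smooth_upto; auto. Qed.

Lemma upto_mul n : forall f g, smooth f -> smooth g -> upto n (fmul f g).
Proof.
  induction n as [|n IH]; intros f g Hf Hg l Hl.
  - destruct l; [|simpl in Hl; lia].
    apply DD_nil_mul; [apply Hf|apply Hg].
  - destruct l as [|i0 l0] eqn:El.
    + apply DD_nil_mul; [apply Hf|apply Hg].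
    + destruct (exists_last (l:=i0::l0) ltac:(discriminate)) as [l' [i E]].
      rewrite E in *. rewrite length_app in Hl. simpl in Hl.
      unfold DD. rewrite iter_partial_app.
      rewrite (partial_fmul_fun i f g Hf Hg).
      refine (upto_add n _ _ _ _ l' _); [apply IH|apply IH|lia]; auto; apply smooth_partial; auto.
Qed.

Lemma smooth_fmul f g : smooth f -> smooth g -> smooth (fmul f g).
Proof. intros Hf Hg. apply upto_smooth; intro n. apply upto_mul; auto. Qed.

Lemma iter_partial_cst l c : exists c', iter_partial l (fcst c) = fcst c'.
Proof.
  induction l as [|i l [c' IH]].
  - exists c; reflexivity.
  - exists 0. simpl. rewrite IH. apply functional_extensionality; intro x.
    unfold partial, fcst. apply Derive_const.
Qed.

Lemma smooth_fcst c : smooth (fcst c).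
Proof.
  intro l. destruct (iter_partial_cst l c) as [c' E]. unfold DD. rewrite E.
  split.
  - intros i x. unfold fcst. apply ex_derive_const.
  - intros x. unfold fcst. apply continuous_const.
Qed.

Definition dlt (i j : ix) : R :=
  match i, j with i1, i1 => 1 | i2, i2 => 1 | i3, i3 => 1 | _, _ => 0 end.

Lemma partial_coord_fun i j : partial i (coord j) = fcst (dlt i j).
Proof.
  apply functional_extensionality; intros [[a b] c]. unfold partial, fcst.
  destruct i, j; simpl; first [exact (Derive_id _) | apply Derive_const].
Qed.

Lemma smooth_coord j : smooth (coord j).
Proof.
  apply smooth_of_partials.
  - split.
    + intros i [[a b] c]. destruct i, j; simpl;
        first [exact (ex_derive_id _) | apply ex_derive_const].
    + intros [[a b] c]. simpl. destruct j.
      * apply (continuous_ext (fun y : pt => fst (fst y))). intros [[? ?] ?]; reflexivity.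
        apply (continuous_comp fst fst). apply continuous_fst. apply continuous_fst.
      * apply (continuous_ext (fun y : pt => snd (fst y))). intros [[? ?] ?]; reflexivity.
        apply (continuous_comp fst snd). apply continuous_fst. apply continuous_snd.
      * apply (continuous_ext (fun y : pt => snd y)). intros [[? ?] ?]; reflexivity.
        apply continuous_snd.
  - intro i. rewrite partial_coord_fun. apply smooth_fcst.
Qed.

Lemma smooth_fsub f g : smooth f -> smooth g -> smooth (fsub f g).
Proof.
  intros Hf Hg. apply (smooth_ext (fadd f (fmul (fcst (-1)) g))).
  intro x; unfold fadd, fmul, fcst, fsub; ring.
  apply smooth_fadd; auto. apply smooth_fmul; auto. apply smooth_fcst.
Qed.

Lemma partial_fadd i f g x : smooth f -> smooth g ->
  partial i (fadd f g) x = partial i f x + partial i g x.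
Proof. intros; apply partial_fadd_gen; apply smooth_ex_derive; auto. Qed.

Lemma partial_fmul i f g x : smooth f -> smooth g ->
  partial i (fmul f g) x = partial i f x * g x + f x * partial i g x.
Proof. intros; apply partial_fmul_gen; apply smooth_ex_derive; auto. Qed.

Lemma partial_fsub i f g x : smooth f -> smooth g ->
  partial i (fsub f g) x = partial i f x - partial i g x.
Proof.
  intros Hf Hg. unfold partial, fsub.
  exact (Derive_minus (fun t => f (upd i t x)) (fun t => g (upd i t x)) _
    (smooth_ex_derive f i x Hf) (smooth_ex_derive g i x Hg)).
Qed.

Lemma partial_fcst i c x : partial i (fcst c) x = 0.
Proof. unfold partial, fcst. apply Derive_const. Qed.

Lemma partial_coord i j x : partial i (coord j) x = dlt i j.
Proof. rewrite partial_coord_fun. reflexivity. Qed.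

Ltac smt := repeat match goal with
  | |- smooth (fadd _ _) => apply smooth_fadd
  | |- smooth (fmul _ _) => apply smooth_fmul
  | |- smooth (fsub _ _) => apply smooth_fsub
  | |- smooth (fcst _) => apply smooth_fcst
  | |- smooth (coord _) => apply smooth_coord
  | |- smooth (partial _ _) => apply smooth_partial
  | H : smooth ?f |- smooth ?f => exact H
  end.

Lemma schwarz_all (F : R -> R -> R) x y :
  (forall u v, ex_derive (fun z => F z v) u /\ ex_derive (fun z => F u z) v /\
     ex_derive (fun z => Derive (fun t => F z t) v) u /\
     ex_derive (fun z => Derive (fun t => F t z) u) v) ->
  continuity_2d_pt (fun u v => Derive (fun z => Derive (fun t => F z t) v) u) x y ->
  continuity_2d_pt (fun u v => Derive (fun z => Derive (fun t => F t z) u) v) x y ->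
  Derive (fun z => Derive (fun t => F z t) y) x = Derive (fun z => Derive (fun t => F t z) x) y.
Proof.
  intros H C1 C2. apply Schwarz; auto.
  exists (mkposreal _ Rlt_0_1). intros; apply H.
Qed.

Lemma slice12 (h : pt -> R) a b c : continuous h (a,b,c) ->
  continuity_2d_pt (fun u v => h (u,v,c)) a b.
Proof.
  intro H. apply continuity_2d_pt_filterlim.
  apply (continuous_comp (fun z : R*R => (fst z, snd z, c)) h (a,b)); [|exact H].
  apply cont_pair; [apply cont_pair|]. apply continuous_fst. apply continuous_snd.
  apply continuous_const.
Qed.

Lemma slice13 (h : pt -> R) a b c : continuous h (a,b,c) ->
  continuity_2d_pt (fun u v => h (u,b,v)) a c.
Proof.
  intro H. apply continuity_2d_pt_filterlim.
  apply (continuous_comp (fun z : R*R => (fst z, b, snd z)) h (a,c)); [|exact H].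
  apply cont_pair; [apply cont_pair|]. apply continuous_fst. apply continuous_const.
  apply continuous_snd.
Qed.

Lemma slice23 (h : pt -> R) a b c : continuous h (a,b,c) ->
  continuity_2d_pt (fun u v => h (a,u,v)) b c.
Proof.
  intro H. apply continuity_2d_pt_filterlim.
  apply (continuous_comp (fun z : R*R => (a, fst z, snd z)) h (b,c)); [|exact H].
  apply cont_pair; [apply cont_pair|]. apply continuous_const. apply continuous_fst.
  apply continuous_snd.
Qed.

Lemma ED (g : pt -> R) l i x : smooth g ->
  ex_derive (fun t => iter_partial l g (upd i t x)) (coord i x).
Proof. intro H. exact (proj1 (H l) i x). Qed.

Lemma CC (g : pt -> R) l x : smooth g -> continuous (iter_partial l g) x.
Proof. intro H. exact (proj2 (H l) x). Qed.

Lemma schwarz12 g a b c : smooth g ->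
  partial i1 (partial i2 g) (a,b,c) = partial i2 (partial i1 g) (a,b,c).
Proof.
  intro H.
  exact (schwarz_all (fun u v => g (u,v,c)) a b
    (fun u v => conj (ED g nil i1 (u,v,c) H) (conj (ED g nil i2 (u,v,c) H)
      (conj (ED g (i2::nil) i1 (u,v,c) H) (ED g (i1::nil) i2 (u,v,c) H))))
    (slice12 (iter_partial (i1::i2::nil) g) a b c (CC g _ _ H))
    (slice12 (iter_partial (i2::i1::nil) g) a b c (CC g _ _ H))).
Qed.

Lemma schwarz13 g a b c : smooth g ->
  partial i1 (partial i3 g) (a,b,c) = partial i3 (partial i1 g) (a,b,c).
Proof.
  intro H.
  exact (schwarz_all (fun u v => g (u,b,v)) a c
    (fun u v => conj (ED g nil i1 (u,b,v) H) (conj (ED g nil i3 (u,b,v) H)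
      (conj (ED g (i3::nil) i1 (u,b,v) H) (ED g (i1::nil) i3 (u,b,v) H))))
    (slice13 (iter_partial (i1::i3::nil) g) a b c (CC g _ _ H))
    (slice13 (iter_partial (i3::i1::nil) g) a b c (CC g _ _ H))).
Qed.

Lemma schwarz23 g a b c : smooth g ->
  partial i2 (partial i3 g) (a,b,c) = partial i3 (partial i2 g) (a,b,c).
Proof.
  intro H.
  exact (schwarz_all (fun u v => g (a,u,v)) b c
    (fun u v => conj (ED g nil i2 (a,u,v) H) (conj (ED g nil i3 (a,u,v) H)
      (conj (ED g (i3::nil) i2 (a,u,v) H) (ED g (i2::nil) i3 (a,u,v) H))))
    (slice23 (iter_partial (i2::i3::nil) g) a b c (CC g _ _ H))
    (slice23 (iter_partial (i3::i2::nil) g) a b c (CC g _ _ H))).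
Qed.

Lemma schwarz i j g x : smooth g ->
  partial i (partial j g) x = partial j (partial i g) x.
Proof.
  intro H. destruct x as [[a b] c].
  destruct i, j; try reflexivity.
  - exact (schwarz12 g a b c H).
  - exact (schwarz13 g a b c H).
  - exact (eq_sym (schwarz12 g a b c H)).
  - exact (schwarz23 g a b c H).
  - exact (eq_sym (schwarz13 g a b c H)).
  - exact (eq_sym (schwarz23 g a b c H)).
Qed.

Section Main.
Variables b1 b2 b3 : R.

Lemma bracket_pt f g x : bracket (Pbar b1 b2 b3) f g x =
  b1*b2/b3 * coord i3 x * (partial i1 f x * partial i2 g x - partial i2 f x * partial i1 g x)
  + b1 * coord i2 x * (partial i1 f x * partial i3 g x - partial i3 f x * partial i1 g x).
Proof. unfold bracket, sum3, Pbar. simpl. ring. Qed.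

Lemma bracket_fun f g : bracket (Pbar b1 b2 b3) f g =
  fadd (fmul (fmul (fcst (b1*b2/b3)) (coord i3))
         (fsub (fmul (partial i1 f) (partial i2 g)) (fmul (partial i2 f) (partial i1 g))))
       (fmul (fmul (fcst b1) (coord i2))
         (fsub (fmul (partial i1 f) (partial i3 g)) (fmul (partial i3 f) (partial i1 g)))).
Proof. apply functional_extensionality; intro x. rewrite bracket_pt. reflexivity. Qed.

Lemma smooth_bracket f g : smooth f -> smooth g -> smooth (bracket (Pbar b1 b2 b3) f g).
Proof. intros. rewrite bracket_fun. smt. Qed.

Opaque partial.
Lemma jacobi f g h : smooth f -> smooth g -> smooth h -> forall x,
      bracket (Pbar b1 b2 b3) f (bracket (Pbar b1 b2 b3) g h) x
      + bracket (Pbar b1 b2 b3) g (bracket (Pbar b1 b2 b3) h f) x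
      + bracket (Pbar b1 b2 b3) h (bracket (Pbar b1 b2 b3) f g) x = 0.
Proof.
  intros Sf Sg Sh x.
  rewrite !bracket_pt. rewrite !bracket_fun.
  rewrite !partial_fadd, !partial_fmul, !partial_fsub, !partial_fmul, !partial_fcst, !partial_coord.
  all: try solve [smt].
  unfold fadd, fmul, fsub, fcst. cbn [dlt].
  try rewrite (schwarz i2 i1 f x Sf); try rewrite (schwarz i3 i1 f x Sf); try rewrite (schwarz i3 i2 f x Sf);
  try rewrite (schwarz i2 i1 g x Sg); try rewrite (schwarz i3 i1 g x Sg); try rewrite (schwarz i3 i2 g x Sg);
  try rewrite (schwarz i2 i1 h x Sh); try rewrite (schwarz i3 i1 h x Sh); try rewrite (schwarz i3 i2 h x Sh).
  ring.
Qed.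

Lemma skew f g x : bracket (Pbar b1 b2 b3) f g x = - bracket (Pbar b1 b2 b3) g f x.
Proof. rewrite !bracket_pt. ring. Qed.

Lemma lin f g h (a c : R) : smooth f -> smooth g -> forall x,
  bracket (Pbar b1 b2 b3) (fun y => a * f y + c * g y) h x
  = a * bracket (Pbar b1 b2 b3) f h x + c * bracket (Pbar b1 b2 b3) g h x.
Proof.
  intros Sf Sg x. rewrite !bracket_pt.
  change (fun y => a * f y + c * g y) with (fadd (fmul (fcst a) f) (fmul (fcst c) g)).
  rewrite !partial_fadd, !partial_fmul, !partial_fcst.
  all: try solve [smt].
  unfold fcst. ring.
Qed.

Lemma leib f g h : smooth f -> smooth g -> forall x,
  bracket (Pbar b1 b2 b3) (fun y => f y * g y) h x
  = f x * bracket (Pbar b1 b2 b3) g h x + g x * bracket (Pbar b1 b2 b3) f h x.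
Proof.
  intros Sf Sg x. rewrite !bracket_pt.
  change (fun y => f y * g y) with (fmul f g).
  rewrite !partial_fmul by smt. ring.
Qed.
End Main.

Transparent partial.

Theorem proposition3p3 (b1 b2 b3 : R) (hb : b1 * b2 * b3 <> 0) :
  hamilton_poisson_realization (Pbar b1 b2 b3) (Hbar b1 b2 b3) (Xsys b1 b2 b3) /\
  casimir (Pbar b1 b2 b3) (Cbar b1 b2 b3).
Proof.
  assert (n1 : b1 <> 0) by (intro E; apply hb; rewrite E; ring).
  assert (n3 : b3 <> 0) by (intro E; apply hb; rewrite E; ring).
  assert (EH : Hbar b1 b2 b3 = fadd (fmul (fcst (- (b3 / (2 * b1)))) (fmul (coord i1) (coord i1))) (coord i3)).
  { apply functional_extensionality; intro x. unfold Hbar, fadd, fmul, fcst. ring. }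
  assert (EC : Cbar b1 b2 b3 = fmul (fcst (b1/2)) (fsub (fmul (coord i2) (coord i2))
             (fmul (fcst (b2/b3)) (fmul (coord i3) (coord i3))))).
  { apply functional_extensionality; intro x. unfold Cbar, fsub, fmul, fcst. ring. }
  split; [split; [|split]|split].
  - split; [|split; [|split; [|split; [|split]]]].
    + intros i j. destruct i, j.
      - apply (smooth_ext (fcst 0)). intro x; reflexivity. apply smooth_fcst.
      - apply (smooth_ext (fmul (fcst (b1*b2/b3)) (coord i3))). intros [[a b] c]; reflexivity. smt.
      - apply (smooth_ext (fmul (fcst b1) (coord i2))). intros [[a b] c]; reflexivity. smt.
      - apply (smooth_ext (fmul (fcst (-(b1*b2/b3))) (coord i3))). intros [[a b] c]; unfold fmul, fcst; simpl; ring. smt.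
      - apply (smooth_ext (fcst 0)). intro x; reflexivity. apply smooth_fcst.
      - apply (smooth_ext (fcst 0)). intro x; reflexivity. apply smooth_fcst.
      - apply (smooth_ext (fmul (fcst (-b1)) (coord i2))). intros [[a b] c]; unfold fmul, fcst; simpl; ring. smt.
      - apply (smooth_ext (fcst 0)). intro x; reflexivity. apply smooth_fcst.
      - apply (smooth_ext (fcst 0)). intro x; reflexivity. apply smooth_fcst.
    + intros; apply smooth_bracket; auto.
    + intros; apply lin; auto.
    + intros; apply skew.
    + intros; apply leib; auto.
    + intros; apply jacobi; auto.
  - rewrite EH. smt.
  - intros x i. rewrite EH.
    rewrite !(bracket_pt b1 b2 b3) || idtac.
    unfold sum3.
    rewrite !partial_fadd, !partial_fmul, !partial_fcst, !partial_coord.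
    all: try solve [smt].
    unfold fmul, fcst. destruct x as [[a b] c]. destruct i; simpl; field; auto.
  - rewrite EC. smt.
  - intros f Sf x. rewrite bracket_pt, EC.
    rewrite !partial_fmul, !partial_fsub, !partial_fmul, !partial_fcst, !partial_coord.
    all: try solve [smt].
    unfold fmul, fcst, fsub. simpl. field. auto.
Qed.
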